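(* Let $t\in\mathbb{R}^d$, $h>0$, and $\kappa_t:\mathbb{R}^d\to\mathbb{R}_{\ge0}$, $\kappa_t(x)=e^{-\frac{\|x-t\|^2}{2h^2}}$, with $\mathbb{R}^d$ carrying the Euclidean metric. Let $g(x,x')=g_0(\|x-x'\|)$ be a smooth growth function. Let $(w^*,z^* )$ with $w^*\ne z^*$ be such that $B^*(t)=\frac{|\kappa_t(w^* )-\kappa_t(z^* )|}{\|w^*-z^*\|\,g(t,z^* )}$, and assume $z^*\ne t$. Then there is a point $w_L$ on the line connecting $z^*$ and $t$ such that $\frac{|\kappa_t(w_L)-\kappa_t(z^* )|}{\|w_L-z^*\|\,g(t,z^* )}\ge B^*(t)$.
   Context: A smooth growth function is $g(x,x')=g_0(\|x-x'\|)$ with $g_0:\mathbb{R}_{\ge0}\to\mathbb{R}_{\ge1}$ monotonically increasing, $g_0(0)=1$, $g_0(r_1+r_2)\le g_0(r_1)g_0(r_2)$. $B^*(t)$ denotes the $g$-smooth sensitivity of $\kappa_t$ at the point $t$. *)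

(* Defs.v *)
From HB Require Import structures.
From mathcomp Require Import all_boot all_order all_algebra.
From mathcomp Require Import all_classical all_reals all_analysis.
Set Implicit Arguments. Unset Strict Implicit. Unset Printing Implicit Defensive.
Import Order.TTheory GRing.Theory Num.Theory.
Local Open Scope classical_set_scope.
Local Open Scope ring_scope.

Definition enorm {R : realType} {d : nat} (x : 'rV[R]_d) : R :=
  Num.sqrt (\sum_(i < d) (x ord0 i) ^+ 2).

Definition kappa {R : realType} {d : nat} (h : R) (t x : 'rV[R]_d) : R :=
  expR (- (enorm (x - t) ^+ 2) / (2 * h ^+ 2)).

Definition smooth_growth {R : realType} (g0 : R -> R) : Prop :=
  [/\ g0 0 = 1,
      (forall r, 0 <= r -> 1 <= g0 r),
      (forall r1 r2, 0 <= r1 -> r1 <= r2 -> g0 r1 <= g0 r2) &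
      (forall r1 r2, 0 <= r1 -> 0 <= r2 -> g0 (r1 + r2) <= g0 r1 * g0 r2)].

Definition growth {R : realType} {d : nat} (g0 : R -> R) (x x' : 'rV[R]_d) : R :=
  g0 (enorm (x - x')).

Definition sens_ratio {R : realType} {d : nat} (h : R) (g0 : R -> R)
  (t w z : 'rV[R]_d) : R :=
  `|kappa h t w - kappa h t z| / (enorm (w - z) * growth g0 t z).

(* g-smooth sensitivity of kappa_t at t:
   B*(t) = sup_z LS(z)/g(t,z) = sup_{w <> z} |kappa_t(w)-kappa_t(z)| / (||w-z|| g(t,z)) *)
Definition smooth_sens {R : realType} {d : nat} (h : R) (g0 : R -> R)
  (t : 'rV[R]_d) : R :=
  sup [set r | exists w z : 'rV[R]_d, w != z /\ r = sens_ratio h g0 t w z].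

(* Main.v *)
Require Import Defs.
From HB Require Import structures.
From mathcomp Require Import all_boot all_order all_algebra.
From mathcomp Require Import all_classical all_reals all_analysis.
From mathcomp Require Import ring lra.
Import Order.TTheory GRing.Theory Num.Theory.
Local Open Scope ring_scope.

Section S.
Variables (R : realType) (d : nat).
Implicit Types (u v : 'rV[R]_d).

Lemma enorm_ge0 v : 0 <= enorm v.
Proof. exact: sqrtr_ge0. Qed.

Lemma sumsq_ge0 v : 0 <= \sum_(i < d) (v ord0 i) ^+ 2.
Proof. by apply: sumr_ge0 => i _; exact: sqr_ge0. Qed.

Lemma enorm_sqr v : enorm v ^+ 2 = \sum_(i < d) (v ord0 i) ^+ 2.
Proof. by rewrite /enorm sqr_sqrtr // sumsq_ge0. Qed.

Lemma enorm_eq0 v : enorm v = 0 -> v = 0.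
Proof.
move=> /eqP; rewrite /enorm sqrtr_eq0 => H.
have H0 : \sum_(i < d) (v ord0 i) ^+ 2 = 0.
  by apply/eqP; rewrite eq_le H sumsq_ge0.
apply/rowP => i; rewrite mxE.
move/eqP: H0; rewrite psumr_eq0; last by move=> j _; exact: sqr_ge0.
by move=> /allP /(_ i (mem_index_enum i)) /= /eqP /eqP; rewrite sqrf_eq0 => /eqP.
Qed.

Lemma enormZ (a : R) v : enorm (a *: v) = `|a| * enorm v.
Proof.
rewrite /enorm.
have -> : \sum_(i < d) ((a *: v) ord0 i) ^+ 2 = a ^+ 2 * \sum_(i < d) (v ord0 i) ^+ 2.
  by rewrite mulr_sumr; apply: eq_bigr => i _; rewrite mxE exprMn.
by rewrite sqrtrM ?sqr_ge0 // sqrtr_sqr.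
Qed.

Lemma dot_le u v : \sum_(i < d) (u ord0 i * v ord0 i) <= enorm u * enorm v.
Proof.
have [Hu|Hu] := eqVneq (enorm u) 0.
  rewrite Hu mul0r (enorm_eq0 _ Hu) big1 // => i _; by rewrite mxE mul0r.
have [Hv|Hv] := eqVneq (enorm v) 0.
  rewrite Hv mulr0 (enorm_eq0 _ Hv) big1 // => i _; by rewrite mxE mulr0.
have pu : 0 < enorm u by rewrite lt_def Hu enorm_ge0.
have pv : 0 < enorm v by rewrite lt_def Hv enorm_ge0.
set k := enorm v / enorm u.
have kp : 0 < k by rewrite divr_gt0.
apply: (@le_trans _ _ (\sum_(i < d) ((k * (u ord0 i)^+2 + k^-1 * (v ord0 i)^+2) / 2))).
  apply: ler_sum => i _.
  rewrite ler_pdivlMr // -subr_ge0.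
  have -> : k * u ord0 i ^+ 2 + k^-1 * v ord0 i ^+ 2 - u ord0 i * v ord0 i * 2
     = k^-1 * (k * u ord0 i - v ord0 i) ^+ 2.
    by field; rewrite gt_eqF.
  by rewrite mulr_ge0 ?sqr_ge0 // invr_ge0 ltW.
rewrite -mulr_suml big_split /= -!mulr_sumr -!enorm_sqr /k.
rewrite le_eqVlt; apply/orP; left; apply/eqP; field; rewrite ?gt_eqF //.
Qed.

Lemma rev_tri u v : `|enorm u - enorm v| <= enorm (u - v).
Proof.
rewrite -sqrtr_sqr {3}/enorm ler_sqrt; last exact: sumsq_ge0.
have -> : \sum_(i < d) ((u - v) ord0 i) ^+ 2 =
  \sum_(i < d) (u ord0 i)^+2 + \sum_(i < d) (v ord0 i)^+2
   - 2 * \sum_(i < d) (u ord0 i * v ord0 i).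
  rewrite mulr_sumr -big_split -sumrN -big_split /=; apply: eq_bigr => i _.
  by rewrite !mxE; ring.
rewrite -!enorm_sqr.
have := dot_le u v; nra.
Qed.
End S.

Theorem mainTheorem13 (R : realType) (d : nat) (t : 'rV[R]_d) (h : R)
  (g0 : R -> R) (ws zs : 'rV[R]_d) :
  0 < h -> smooth_growth g0 -> ws != zs ->
  smooth_sens h g0 t = sens_ratio h g0 t ws zs ->
  zs != t ->
  exists s : R,
    let wL := zs + s *: (t - zs) in
    wL != zs /\ smooth_sens h g0 t <= sens_ratio h g0 t wL zs.
Proof.
move=> hp [g00 g0ge1 _ _] Hne HB Hzt.
set r := enorm (zs - t).
have rp : 0 < r.
  rewrite lt_def enorm_ge0 andbT; apply/eqP => /enorm_eq0 /eqP.
  by rewrite subr_eq0 (negbTE Hzt).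
set rho := enorm (ws - t).
have rhop : 0 <= rho by exact: enorm_ge0.
have G1 : 1 <= growth g0 t zs by apply: g0ge1; exact: enorm_ge0.
have Gp : 0 < growth g0 t zs by apply: lt_le_trans G1.
have rat0 : forall w, 0 <= sens_ratio h g0 t w zs.
  move=> w; rewrite /sens_ratio divr_ge0 // mulr_ge0 ?enorm_ge0 //; exact: ltW.
have etz : enorm (t - zs) = r.
  by rewrite -opprB -scaleN1r enormZ normrN normr1 mul1r.
have [Hrr|Hrr] := eqVneq rho r.
  exists 1 => /=; rewrite scale1r addrC subrK; split; first by rewrite eq_sym.
  have Hk : kappa h t ws = kappa h t zs by rewrite /kappa -/rho -/r Hrr.
  by rewrite HB /sens_ratio Hk subrr normr0 mul0r; apply: rat0.
exists (1 - rho / r) => /=.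
set s := 1 - rho / r.
have E1 : zs + s *: (t - zs) - zs = s *: (t - zs) by rewrite addrAC subrr add0r.
have E2 : zs + s *: (t - zs) - t = (rho / r) *: (zs - t).
  by apply/rowP => i; rewrite !mxE /s; ring.
have N2 : enorm (zs + s *: (t - zs) - t) = rho.
  by rewrite E2 enormZ ger0_norm ?divr_ge0 ?(ltW rp) // divfK // gt_eqF.
have N1 : enorm (zs + s *: (t - zs) - zs) = `|r - rho|.
  rewrite E1 enormZ etz -(ger0_norm (ltW rp)) -normrM /s mulrBl mul1r divfK ?gt_eqF //.
  by rewrite (ger0_norm (ltW rp)).
have Hd : 0 < `|r - rho| by rewrite normr_gt0 subr_eq0 eq_sym.
split.
  apply/negP => /eqP Heq; move: N1; rewrite Heq subrr.
  have -> : enorm (0 : 'rV[R]_d) = 0 by rewrite -(scale0r (0 : 'rV[R]_d)) enormZ normr0 mul0r.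
  by move=> H0; move: Hd; rewrite -H0 ltxx.
have Hk : kappa h t (zs + s *: (t - zs)) = kappa h t ws by rewrite /kappa N2.
have Hle : `|r - rho| <= enorm (ws - zs).
  rewrite (_ : ws - zs = ws - t - (zs - t)); last by apply/rowP => i; rewrite !mxE; ring.
  by rewrite distrC; exact: rev_tri.
rewrite HB /sens_ratio Hk N1; apply: ler_wpM2l; first exact: normr_ge0.
rewrite lef_pV2 ?posrE ?mulr_gt0 //; last by apply: lt_le_trans Hle.
by apply: ler_wpM2r; [exact: ltW|].
Qed.
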